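(* Let $\mathfrak{a}$ be a saturated ideal of ${}^b\mathbb{C}[X]={}^b\mathbb{C}[X_1,\dots,X_n]$, $A={}^b\mathbb{C}[X]/\mathfrak{a}$, and $Inf(A)$ the kernel of the standard part map $A\to A^{an}$. Then $Inf(A)^2=Inf(A)$.
   Context: ${}^*\mathbb{C}$ is an ultrapower of $\mathbb{C}$, ${}^b\mathbb{C}$ its bounded elements. ${}^b\mathbb{C}[X]$ is the ring of internal polynomials $P$ (elements of the ultrapower of $\mathbb{C}[X_1,\dots,X_n]$) with $P({}^b\mathbb{C}^n)\subset{}^b\mathbb{C}$; $\mathrm{st}:{}^b\mathbb{C}[X]\to\mathcal{O}(\mathbb{C}^n)$, $\mathrm{st}(P)(x)=$ standard part of $P(x)$ for $x\in\mathbb{C}^n$. $A^{an}:=\mathcal{O}(\mathbb{C}^n)/\overline{\mathrm{st}(\mathfrak{a})}$ (closure for the compact-open topology), and $A\to A^{an}$ is induced by $\mathrm{st}$. $\mathfrak{a}$ is saturated if $\mathrm{st}(\mathfrak{a})=\overline{\mathrm{st}(\mathfrak{a})}$. *)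

(* Defs.v *)
From mathcomp Require Import all_boot all_order all_algebra.
From mathcomp Require Import complex.
From mathcomp Require Import Rstruct.
From mathcomp Require Import mpoly.
From Stdlib Require Import Reals.

Set Implicit Arguments.
Unset Strict Implicit.
Unset Printing Implicit Defensive.

Import Order.TTheory GRing.Theory Num.Theory.
Local Open Scope ring_scope.

Definition RR : rcfType := Rdefinitions.R.
Definition CC := complex RR.
Definition cabs (z : CC) : RR := Normc.normc z.

Record ultrafilter (I : Type) := Ultrafilter {
  uf_mem :> (I -> Prop) -> Prop;
  uf_full : uf_mem (fun _ => True);
  uf_proper : ~ uf_mem (fun _ => False);
  uf_up : forall A B : I -> Prop, uf_mem A -> (forall i, A i -> B i) -> uf_mem B;
  uf_inter : forall A B : I -> Prop, uf_mem A -> uf_mem B -> uf_mem (fun i => A i /\ B i);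
  uf_ultra : forall A : I -> Prop, uf_mem A \/ uf_mem (fun i => ~ A i)
}.

(* Countably incomplete (hence nonprincipal) ultrafilter: the usual hypothesis
   making the ultrapower a nonstandard extension. *)
Definition countably_incomplete I (U : ultrafilter I) : Prop :=
  exists A : nat -> I -> Prop, (forall k, U (A k)) /\ (forall i, exists k, ~ A k i).

(* Elements of *C are represented by I -> CC (modulo U-a.e. equality). *)
Definition hbounded I (U : ultrafilter I) (x : I -> CC) : Prop :=
  exists r : RR, U (fun i => cabs (x i) <= r).

Definition is_st I (U : ultrafilter I) (x : I -> CC) (c : CC) : Prop :=
  forall eps : RR, 0 < eps -> U (fun i => cabs (x i - c) < eps).

(* Internal polynomials in n variables: elements of the ultrapower of
   C[X_1..X_n], represented by I -> C[X_1..X_n] (modulo U-a.e. equality). *)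
Definition ipoly (I : Type) (n : nat) : Type := I -> mpoly.mpoly n CC.
Arguments ipoly : clear implicits.

Definition ieq I (U : ultrafilter I) n (P Q : ipoly I n) : Prop :=
  U (fun i => P i = Q i).

Definition ieval I n (P : ipoly I n) (x : 'I_n -> I -> CC) : I -> CC :=
  fun i => mpoly.meval (fun j => x j i) (P i).

(* P belongs to bC[X]: P( bC^n ) is contained in bC. *)
Definition bCX I (U : ultrafilter I) n (P : ipoly I n) : Prop :=
  forall x : 'I_n -> I -> CC, (forall j, hbounded U (x j)) -> hbounded U (ieval P x).

Definition st_of I (U : ultrafilter I) n (P : ipoly I n) (f : ('I_n -> CC) -> CC) : Prop :=
  forall a : 'I_n -> CC, is_st U (fun i => mpoly.meval a (P i)) (f a).

Definition iadd I n (P Q : ipoly I n) : ipoly I n := fun i => P i + Q i.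
Definition isub I n (P Q : ipoly I n) : ipoly I n := fun i => P i - Q i.
Definition imul I n (P Q : ipoly I n) : ipoly I n := fun i => P i * Q i.
Definition izero I n : ipoly I n := fun _ => 0.
Definition isum I n m (F : 'I_m -> ipoly I n) : ipoly I n :=
  fun i => \sum_(k < m) F k i.

Definition is_ideal I (U : ultrafilter I) n (a : ipoly I n -> Prop) : Prop :=
  [/\ (forall P, a P -> bCX U P),
      (forall P Q, a P -> ieq U P Q -> a Q),
      a (@izero I n),
      (forall P Q, a P -> a Q -> a (iadd P Q)) &
      (forall P Q, bCX U P -> a Q -> a (imul P Q))].

Definition st_set I (U : ultrafilter I) n (a : ipoly I n -> Prop)
  (f : ('I_n -> CC) -> CC) : Prop :=
  exists P, a P /\ st_of U P f.

(* Closure for the compact-open topology (= topology of uniform convergence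
   on compact subsets; closed polydiscs are cofinal among compacts). *)
Definition co_closure n (S : (('I_n -> CC) -> CC) -> Prop)
  (f : ('I_n -> CC) -> CC) : Prop :=
  forall r eps : RR, 0 < eps ->
    exists g, S g /\
      forall a : 'I_n -> CC, (forall j, cabs (a j) <= r) -> cabs (f a - g a) <= eps.

Definition saturated I (U : ultrafilter I) n (a : ipoly I n -> Prop) : Prop :=
  forall f, co_closure (st_set U a) f -> st_set U a f.

(* P (in bC[X]) represents an element of Inf(A) = ker(A -> A^an):
   st(P) lies in the closure of st(a). *)
Definition Inf I (U : ultrafilter I) n (a : ipoly I n -> Prop) (P : ipoly I n) : Prop :=
  bCX U P /\ exists f, st_of U P f /\ co_closure (st_set U a) f.

(* P (in bC[X]) represents an element of Inf(A)^2 in A = bC[X]/a. *)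
Definition Inf2 I (U : ultrafilter I) n (a : ipoly I n -> Prop) (P : ipoly I n) : Prop :=
  bCX U P /\
  exists (m : nat) (Q R : 'I_m -> ipoly I n),
    (forall k, Inf U a (Q k) /\ Inf U a (R k)) /\
    a (isub P (isum (fun k => imul (Q k) (R k)))).

(* Main.v *)
From Stdlib Require Import Reals Classical ClassicalEpsilon FunctionalExtensionality.
From mathcomp Require Import all_boot all_order all_algebra complex Rstruct mpoly.
From mathcomp Require Import ring lra zify.
Require Import Defs.
Set Implicit Arguments.
Unset Strict Implicit.
Unset Printing Implicit Defensive.
Import Order.TTheory GRing.Theory Num.Theory.
Local Open Scope ring_scope.
Local Open Scope complex_scope.
Local Open Scope ring_scope.

Lemma cabs_ge0 (z : CC) : 0 <= cabs z.
Proof. by case: z => a b; rewrite /cabs /=; apply: sqrtr_ge0. Qed.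
Lemma cabsD (x y : CC) : cabs (x + y) <= cabs x + cabs y.
Proof. exact: (@le_normcD RR x y). Qed.
Lemma cabsM (x y : CC) : cabs (x * y) = cabs x * cabs y.
Proof. exact: Normc.normcM. Qed.
Lemma cabsN (x : CC) : cabs (- x) = cabs x.
Proof. exact: (@normcN RR x). Qed.
Lemma cabs0 : cabs 0 = 0. Proof. exact: Normc.normc0. Qed.
Lemma cabs1 : cabs 1 = 1. Proof. exact: Normc.normc1. Qed.
Lemma cabsR (r : RR) : cabs r%:C = `|r|.
Proof. by rewrite /cabs /= expr0n /= addr0 sqrtr_sqr. Qed.

Lemma cabsB (x y : CC) : cabs (x - y) = cabs (y - x).
Proof. by rewrite -cabsN opprB. Qed.

Lemma cabs_sum m (F : 'I_m -> CC) : cabs (\sum_(k < m) F k) <= \sum_(k < m) cabs (F k).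
Proof.
elim: m F => [|m IH] F; first by rewrite !big_ord0 cabs0.
rewrite !big_ord_recr /=; apply: le_trans (cabsD _ _) _; rewrite lerD2r; exact: IH.
Qed.

Lemma cabsX (x : CC) k : cabs (x ^+ k) = cabs x ^+ k.
Proof. by elim: k => [|k IH]; rewrite ?expr0 ?cabs1 // !exprS cabsM IH. Qed.

Lemma cabs_tri (x y z : CC) : cabs (x - z) <= cabs (x - y) + cabs (y - z).
Proof. by have := cabsD (x - y) (y - z); rewrite addrA subrK. Qed.

Lemma idD (R : comRingType) (x y a b : R) : x + y - (a + b) = (x - a) + (y - b).
Proof. ring. Qed.
Lemma idM (R : comRingType) (x y a b : R) : x * y - a * b = (x - a) * (y - b) + a * (y - b) + b * (x - a).
Proof. ring. Qed.

Section UF.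
Variables (I : Type) (U : ultrafilter I).

Lemma Uup (A B : I -> Prop) : U A -> (forall i, A i -> B i) -> U B.
Proof. exact: uf_up. Qed.

Lemma Uand (A B : I -> Prop) : U A -> U B -> U (fun i => A i /\ B i).
Proof. exact: uf_inter. Qed.

Lemma Uand2 (A B C : I -> Prop) : U A -> U B -> (forall i, A i -> B i -> C i) -> U C.
Proof. move=> hA hB h; refine (uf_up (Uand hA hB) _) => i [a b]; exact: h. Qed.

Lemma Une (A : I -> Prop) : U A -> exists i, A i.
Proof.
move=> hA; apply: NNPP => hn; apply: (@uf_proper _ U); refine (uf_up hA _) => i Ai.
by apply: hn; exists i.
Qed.

Lemma Uall (A : I -> Prop) : (forall i, A i) -> U A.
Proof. by move=> h; refine (uf_up (@uf_full _ U) _) => i _. Qed.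

Lemma Useq (T : eqType) (s : seq T) (A : T -> I -> Prop) :
  (forall j, j \in s -> U (A j)) -> U (fun i => forall j, j \in s -> A j i).
Proof.
elim: s => [|x s IH] h; first by apply: Uall => i j.
have hs : forall j, j \in s -> U (A j) by move=> j js; apply: h; rewrite inE js orbT.
refine (uf_up (Uand (h x (mem_head _ _)) (IH hs)) _) => i [ax al] j; rewrite inE.
by case/orP => [/eqP->|/al].
Qed.

Lemma Ufin (n : nat) (A : 'I_n -> I -> Prop) :
  (forall j, U (A j)) -> U (fun i => forall j, A j i).
Proof.
move=> h; refine (uf_up (Useq (s := enum 'I_n) (A := A) (fun j _ => h j)) _) => i H j.
by apply: H; rewrite mem_enum.
Qed.

End UF.

Section ST.
Variables (I : Type) (U : ultrafilter I).

Lemma is_st_ext (x y : I -> CC) c : U (fun i => x i = y i) -> is_st U x c -> is_st U y c.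
Proof.
move=> hxy hx e e0; refine (Uand2 hxy (hx e e0) _) => i <- //.
Qed.

Lemma is_st_const c : is_st U (fun _ => c) c.
Proof. by move=> e e0; apply: Uall => i; rewrite subrr cabs0. Qed.

Lemma is_st_add x y a b : is_st U x a -> is_st U y b ->
  is_st U (fun i => x i + y i) (a + b).
Proof.
move=> hx hy e e0; have e2 : 0 < e / 2 by lra.
refine (Uand2 (hx _ e2) (hy _ e2) _) => i h1 h2.
rewrite idD.
apply: le_lt_trans (cabsD _ _) _; lra.
Qed.

Lemma is_st_opp x a : is_st U x a -> is_st U (fun i => - x i) (- a).
Proof. by move=> hx e e0; refine (uf_up (hx e e0) _) => i; rewrite -opprD cabsN. Qed.

Lemma is_st_sub x y a b : is_st U x a -> is_st U y b ->
  is_st U (fun i => x i - y i) (a - b).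
Proof. by move=> hx hy; apply: is_st_add => //; apply: is_st_opp. Qed.

Lemma is_st_mul x y a b : is_st U x a -> is_st U y b ->
  is_st U (fun i => x i * y i) (a * b).
Proof.
move=> hx hy e e0.
set K := 1 + cabs a + cabs b.
have K0 : 0 < K by rewrite /K; have := cabs_ge0 a; have := cabs_ge0 b; lra.
set d := Num.min 1 (e / (2 * K)).
have d0 : 0 < d by rewrite /d lt_min ltr01 /= divr_gt0 // mulr_gt0.
have d1 : d <= 1 by rewrite /d ge_min lexx.
have dK : d * K <= e / 2.
  have : d <= e / (2 * K) by rewrite /d ge_min lexx orbT.
  rewrite ler_pdivlMr ?mulr_gt0 //; lra.
refine (Uand2 (hx _ d0) (hy _ d0) _) => i h1 h2.
rewrite idM.
apply: le_lt_trans (cabsD _ _) _; apply: le_lt_trans (lerD (cabsD _ _) (lexx _)) _.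
rewrite !cabsM.
have := cabs_ge0 a; have := cabs_ge0 b; have := cabs_ge0 (x i - a); have := cabs_ge0 (y i - b).
rewrite /K in dK; nra.
Qed.

Lemma is_st_sum m (x : 'I_m -> I -> CC) c : (forall k, is_st U (x k) (c k)) ->
  is_st U (fun i => \sum_(k < m) x k i) (\sum_(k < m) c k).
Proof.
elim: m x c => [|m IH] x c h.
  by apply: (is_st_ext (x := fun _ => 0)); [apply: Uall => i; rewrite big_ord0|rewrite big_ord0; apply: is_st_const].
apply: (is_st_ext (x := fun i => \sum_(k < m) x (widen_ord (leqnSn m) k) i + x ord_max i)).
  by apply: Uall => i; rewrite big_ord_recr.
rewrite big_ord_recr; apply: is_st_add; last exact: h.
by apply: (IH (fun k => x (widen_ord (leqnSn m) k))) => k; apply: h.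
Qed.

End ST.

Lemma cabs_ReIm (a b : RR) : cabs (a +i* b) <= `|a| + `|b|.
Proof.
rewrite /cabs /= [X in _ <= X](_ : _ = Num.sqrt ((`|a| + `|b|) ^+ 2)); last first.
  by rewrite sqrtr_sqr (ger0_norm (addr_ge0 (normr_ge0 a) (normr_ge0 b))).
apply: ler_wsqrtr.
have := normr_ge0 a; have := normr_ge0 b; rewrite -[a ^+ 2]real_normK ?num_real // -[b ^+ 2]real_normK ?num_real //.
nra.
Qed.

Lemma Re_cabs (z : CC) : `|complex.Re z| <= cabs z.
Proof.
case: z => a b; rewrite /cabs /= -sqrtr_sqr; apply: ler_wsqrtr.
have := sqr_ge0 b; lra.
Qed.

Lemma Im_cabs (z : CC) : `|complex.Im z| <= cabs z.
Proof.
case: z => a b; rewrite /cabs /= -sqrtr_sqr; apply: ler_wsqrtr.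
have := sqr_ge0 a; lra.
Qed.

Section STEX.
Variables (I : Type) (U : ultrafilter I).

Lemma st_real (y : I -> RR) (r : RR) : U (fun i => `|y i| <= r) ->
  exists s : RR, forall e : RR, 0 < e -> U (fun i => `|y i - s| < e).
Proof.
move=> hb.
pose E := fun t : RR => U (fun i => t <= y i).
have bE : bound E.
  exists r => t Et; apply/RleP; rewrite leNgt; apply/negP => rt.
  have [i [h1 h2]] := Une (Uand Et hb).
  have := ler_norm (y i); lra.
have nE : exists t, E t.
  exists (- r); refine (uf_up hb _) => i; rewrite ler_norml; by case/andP.
have [s [ub lub]] := @completeness E bE nE.
exists s => e e0.
have h1 : U (fun i => s - e < y i).
  apply: NNPP => hn; have : Rle s (Rminus s e).
    apply: lub => t Et; apply/RleP; rewrite leNgt; apply/negP => lt.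
    apply: hn; refine (uf_up Et _) => i ti; rewrite ?RminusE in lt *; lra.
  rewrite ?RminusE; move/RleP; lra.
have h2 : U (fun i => y i < s + e / 2).
  case: (uf_ultra U (fun i => s + e / 2 <= y i)) => h.
    have := ub _ h; move/RleP; lra.
  by refine (uf_up h _) => i; rewrite leNgt => /negP; rewrite negbK.
refine (Uand2 h1 h2 _) => i h3 h4; rewrite ltr_distl; apply/andP; split; lra.
Qed.

Lemma st_exists (x : I -> CC) : hbounded U x -> exists c, is_st U x c.
Proof.
move=> [r hr].
have [s1 h1] := @st_real (fun i => complex.Re (x i)) r
  (uf_up hr (fun i h => le_trans (Re_cabs _) h)).
have [s2 h2] := @st_real (fun i => complex.Im (x i)) r
  (uf_up hr (fun i h => le_trans (Im_cabs _) h)).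
exists (s1 +i* s2) => e e0; have e2 : 0 < e / 2 by lra.
refine (Uand2 (h1 _ e2) (h2 _ e2) _) => i g1 g2.
case E : (x i) => [a b]; rewrite E /= in g1 g2.
apply: le_lt_trans (cabs_ReIm _ _) _; lra.
Qed.

End STEX.

Lemma least_fail (P : nat -> Prop) : (exists k, ~ P k) ->
  exists m, ~ P m /\ forall j : nat, (j < m)%N -> P j.
Proof.
case=> k; elim: k {-2}k (leqnn k) => [|K IH] k hk nPk.
  by exists k; split => // j; rewrite (leqn0 _) in hk; move/eqP: hk => ->.
case: (classic (exists j, (j < k)%N /\ ~ P j)) => [[j [jk nPj]]|h].
  by apply: (IH j) => //; rewrite -ltnS; apply: leq_trans hk.
exists k; split => // j jk; apply: NNPP => nPj; apply: h; by exists j.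
Qed.

Section OVERSPILL.
Variables (I : Type) (U : ultrafilter I).

Lemma overspill : countably_incomplete U -> forall B : nat -> I -> Prop,
  (forall k, U (B k)) ->
  exists N : I -> nat, (forall k, U (fun i => (k <= N i)%N)) /\
                       (forall i, N i = 0%N \/ B (N i) i).
Proof.
move=> [A [hA hAi]] B hB.
pose C k i := forall j : nat, (j <= k)%N -> A j i /\ B j i.
have hC : forall k, U (C k).
  elim=> [|k IH].
    refine (uf_up (Uand (hA 0%N) (hB 0%N)) _) => i h j; rewrite leqn0 => /eqP -> //.
  refine (uf_up (Uand IH (Uand (hA k.+1) (hB k.+1))) _) => i [h1 h2] j.
  rewrite leq_eqVlt ltnS => /orP [/eqP -> //|]; exact: h1.
have ex : forall i, exists m, ~ C m i /\ forall j : nat, (j < m)%N -> C j i.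
  move=> i; apply: least_fail; have [k nA] := hAi i.
  by exists k => h; apply: nA; case: (h k (leqnn k)).
pose N i := (proj1_sig (constructive_indefinite_description _ (ex i))).-1.
exists N; split.
  move=> k; refine (uf_up (hC k) _) => i Cki; rewrite /N.
  case: (constructive_indefinite_description _ (ex i)) => m [nC hm] /=.
  case: (ltnP k m) => km; first by rewrite -ltnS; case: m {nC hm} km.
  by exfalso; apply: nC => j jm; apply: Cki; apply: leq_trans jm km.
move=> i; rewrite /N.
case: (constructive_indefinite_description _ (ex i)) => m [nC hm] /=.
case: m nC hm => [|m] nC hm; first by left.
by right; case: (hm m (ltnSn m) m (leqnn m)).
Qed.

End OVERSPILL.

(* roots of unity of order 2^k *)
Fixpoint w (k : nat) : CC :=
  if k is k'.+1 then (if k' is 0%N then -1 else sqrtC (w k')) else 1.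

Lemma w_sq k : w k.+1 ^+ 2 = w k.
Proof. case: k => [|k] /=; first by rewrite expr2 mulrNN mulr1. exact: sqrtCK. Qed.

Lemma w_half k : w k.+1 ^+ (2 ^ k) = -1.
Proof.
elim: k => [|k IH]; first by rewrite expn0 expr1.
by rewrite expnS exprM w_sq.
Qed.

Lemma w_full k : w k ^+ (2 ^ k) = 1.
Proof.
case: k => [|k]; first by rewrite expn0 expr1.
by rewrite expnS mulnC exprM w_half expr2 mulrNN mulr1.
Qed.

Lemma m1_neq1 : (-1 : CC) != 1.
Proof.
apply/eqP => h; have : (2%:R : CC) == 0.
  by rewrite -[2%:R]/(1 + 1) -{1}h addNr.
by rewrite pnatr_eq0.
Qed.

Lemma w_prim k d : (0 < d)%N -> (d < 2 ^ k)%N -> w k ^+ d != 1.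
Proof.
elim: k d => [|k IH] d d0 dk; first by rewrite expn0 in dk; case: d d0 dk.
have hd := odd_double_half d; case hod : (odd d) in hd.
  apply/eqP => h1; have : w k.+1 ^+ (d * 2 ^ k) = 1 by rewrite exprM h1 expr1n.
  rewrite mulnC exprM w_half -signr_odd hod expr1 => h2.
  by move: m1_neq1; rewrite h2 eqxx.
rewrite add0n in hd; rewrite -hd -muln2 mulnC exprM w_sq; apply: IH.
  by rewrite -hd in d0; rewrite -double_gt0.
by rewrite -ltn_double hd -muln2 -expnSr.
Qed.

Lemma geom_sum0 (z : CC) N : z ^+ N = 1 -> z != 1 -> \sum_(j < N) z ^+ j = 0.
Proof.
move=> zN z1; have := subrX1 z N; rewrite zN subrr => /esym /eqP.
by rewrite mulf_eq0 subr_eq0 (negbTE z1) /= => /eqP.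
Qed.

Lemma w_exp_neq1 k e : (0 < e %% 2 ^ k)%N -> w k ^+ e != 1.
Proof.
move=> he; rewrite -(expr_mod _ (w_full k)); apply: w_prim => //.
by rewrite ltn_mod expn_gt0.
Qed.

Lemma fourier k (p : {poly CC}) l : (size p <= 2 ^ k)%N -> (l < 2 ^ k)%N ->
  (2 ^ k)%:R * p`_l = \sum_(j < 2 ^ k) p.[w k ^+ j] * w k ^+ (j * (2 ^ k - l)).
Proof.
move=> hs hl; set N := (2 ^ k)%N; set z := w k.
have N0 : (0 < N)%N by rewrite expn_gt0.
have -> : \sum_(j < N) p.[z ^+ j] * z ^+ (j * (N - l)) =
          \sum_(j < N) \sum_(m < N) p`_m * (z ^+ (m + (N - l))) ^+ j.
  apply: eq_bigr => j _; rewrite (horner_coef_wide _ hs) mulr_suml.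
  apply: eq_bigr => m _; rewrite -mulrA; congr (_ * _).
  by rewrite -!exprM -exprD -mulnDr mulnC.
rewrite exchange_big /=.
rewrite (bigD1 (Ordinal hl)) //= [X in _ + X]big1 ?addr0; last first.
  move=> m /eqP hml; rewrite -mulr_sumr geom_sum0 ?mulr0 //.
    by rewrite -exprM mulnC exprM w_full expr1n.
  apply: w_exp_neq1.
  have hm : m <> l :> nat by move=> h; apply: hml; apply: val_inj.
  have mN := ltn_ord m.
  case: (ltngtP m l) => hml'; last by [].
    rewrite modn_small; first by rewrite addn_gt0 subn_gt0 hl orbT.
    rewrite /N; lia.
  have -> : (m + (N - l) = (m - l) + N)%N by rewrite /N; lia.
  rewrite modnDr modn_small; rewrite /N; lia.
rewrite -mulr_sumr subnKC ?(ltnW hl) // w_full.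
under eq_bigr do rewrite expr1n.
by rewrite sumr_const card_ord mulrC mulr_natr.
Qed.

Lemma cabs_nat n : cabs (n%:R) = n%:R.
Proof. by rewrite -(rmorph_nat (real_complex RR)) cabsR ger0_norm. Qed.

Lemma cabs_w k : cabs (w k) = 1.
Proof.
apply/eqP; rewrite -(@pexpr_eq1 _ _ (2 ^ k)) ?expn_gt0 ?cabs_ge0 //.
by rewrite -cabsX w_full cabs1.
Qed.

Lemma coef_bound (p : {poly CC}) (M : RR) :
  (forall z, cabs z <= 1 -> cabs p.[z] <= M) -> forall l, cabs p`_l <= M.
Proof.
move=> hp l.
have M0 : 0 <= M by have := hp 0; rewrite cabs0 ler01 => /(_ isT); apply: le_trans; exact: cabs_ge0.
set k := size p.
have hs : (size p <= 2 ^ k)%N by apply: ltnW; apply: ltn_expl.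
case: (ltnP l (2 ^ k)) => hl; last first.
  by rewrite nth_default ?cabs0 //; apply: leq_trans hs hl.
have N0 : (0 < (2 ^ k)%:R :> RR) by rewrite ltr0n expn_gt0.
have h := fourier hs hl.
have : (2 ^ k)%:R * cabs p`_l <= (2 ^ k)%:R * M.
  rewrite -cabs_nat -cabsM h.
  apply: le_trans (cabs_sum _) _.
  rewrite cabs_nat.
  have -> : (2 ^ k)%:R * M = \sum_(j < 2 ^ k) M by rewrite sumr_const card_ord mulr_natl.
  apply: ler_sum => j _; rewrite cabsM cabsX cabs_w expr1n mulr1.
  by apply: hp; rewrite cabsX cabs_w expr1n.
by rewrite ler_pM2l.
Qed.

Lemma geo (s : RR) K : 0 <= s -> s <= 1 / 2 -> \sum_(m < K) s ^+ m <= 2 - 2 * s ^+ K.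
Proof.
move=> s0 s1; elim: K => [|K IH]; first by rewrite big_ord0 expr0; lra.
rewrite big_ord_recr /= exprS.
have := exprn_ge0 K s0; nra.
Qed.

Lemma poly_diff (p : {poly CC}) (M : RR) t :
  (forall z, cabs z <= 1 -> cabs p.[z] <= M) -> cabs t <= 1 / 2 ->
  cabs (p.[t] - p.[0]) <= 2 * M * cabs t.
Proof.
move=> hp ht.
have M0 : 0 <= M by have := hp 0; rewrite cabs0 ler01 => /(_ isT); apply: le_trans; exact: cabs_ge0.
have t0 := cabs_ge0 t.
rewrite horner_coef0 horner_coef.
case E : (size p) => [|N].
  by rewrite big_ord0 nth_default ?E // subr0 cabs0; nra.
rewrite big_ord_recl /= expr0 mulr1 addrC addKr.
apply: le_trans (cabs_sum _) _.
apply: (@le_trans _ _ (\sum_(m < N) M * cabs t * cabs t ^+ m)).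
  apply: ler_sum => m _; rewrite cabsM cabsX exprS mulrA.
  apply: ler_wpM2r; first exact: exprn_ge0.
  by apply: ler_wpM2r => //; apply: coef_bound.
rewrite -mulr_sumr; have := geo N t0 ht; have := exprn_ge0 N t0.
have : 0 <= \sum_(m < N) cabs t ^+ m by apply: sumr_ge0 => m _; apply: exprn_ge0.
have := mulr_ge0 M0 t0. nra.
Qed.

Definition line_poly n (D : mpoly.mpoly n CC) (c u : 'I_n -> CC) : {poly CC} :=
  mmap (@polyC CC) (fun j => (c j)%:P + (u j)%:P * 'X) D.

Lemma line_polyE n (D : mpoly.mpoly n CC) c u t :
  (line_poly D c u).[t] = meval (fun j => c j + u j * t) D.
Proof.
rewrite /line_poly /mmap mevalE horner_sum; apply: eq_bigr => m _.
rewrite hornerCM /mmap1 horner_prod; congr (_ * _); apply: eq_bigr => j _.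
by rewrite horner_exp hornerD hornerC hornerCM hornerX.
Qed.

Section MAIN.
Variables (I : Type) (U : ultrafilter I) (n : nat).

Lemma cid_fun (A : Type) (B : Type) (P : A -> B -> Prop) :
  (forall a, exists b, P a b) -> exists f : A -> B, forall a, P a (f a).
Proof.
move=> h; exists (fun a => proj1_sig (constructive_indefinite_description _ (h a))).
by move=> a; case: (constructive_indefinite_description _ (h a)).
Qed.

Lemma hb_nat (x : I -> CC) : hbounded U x -> exists K : nat, U (fun i => cabs (x i) <= K%:R).
Proof.
move=> [r hr]; exists (Num.Def.archi_bound `|r|); refine (uf_up hr _) => i h.
apply: (le_trans h); apply: (le_trans (ler_norm r)); apply: ltW; apply: archi_boundP.
exact: normr_ge0.
Qed.

Lemma hb_le (x : I -> CC) (r : RR) : U (fun i => cabs (x i) <= r) -> hbounded U x.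
Proof. by move=> h; exists r. Qed.

Lemma hb_pts (x : 'I_n -> I -> CC) : (forall j, hbounded U (x j)) ->
  exists K : nat, U (fun i => forall j, cabs (x j i) <= K%:R).
Proof.
move=> hx; have [Kf hK] := cid_fun (fun j => hb_nat (hx j)).
exists (\max_(j < n) Kf j)%N; refine (uf_up (Ufin hK) _) => i h j.
apply: (le_trans (h j)); rewrite ler_nat; exact: (leq_bigmax j).
Qed.

Lemma unif (D : ipoly I n) (c : 'I_n -> CC) (v : I -> 'I_n -> CC) :
  countably_incomplete U -> bCX U D -> (forall i j, cabs (v i j) <= 1) ->
  exists M : RR, U (fun i => forall t, cabs t <= 1 ->
     cabs (meval (fun j => c j + v i j * t) (D i)) <= M).
Proof.
move=> ci hD hv; apply: NNPP => hn.
pose B k i := exists t, cabs t <= 1 /\ k%:R < cabs (meval (fun j => c j + v i j * t) (D i)).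
have hB : forall k, U (B k).
  move=> k; case: (uf_ultra U (B k)) => // h; exfalso; apply: hn; exists k%:R.
  refine (uf_up h _) => i nB t t1; rewrite leNgt; apply/negP => lt; apply: nB.
  by exists t.
have [N [hN1 hN2]] := overspill ci hB.
have ex : forall i, exists t, cabs t <= 1 /\
    (N i = 0%N \/ (N i)%:R < cabs (meval (fun j => c j + v i j * t) (D i))).
  move=> i; case: (hN2 i) => [h|[t [t1 ht]]]; last by exists t; split => //; right.
  by exists 0; rewrite cabs0 ler01; split => //; left.
have [tf htf] := cid_fun ex.
pose x j i := c j + v i j * tf i.
have hx : forall j, hbounded U (x j).
  move=> j; apply: (hb_le (r := cabs (c j) + 1)); apply: Uall => i.
  apply: le_trans (cabsD _ _) _; rewrite lerD2l cabsM.
  have := cabs_ge0 (v i j); have := cabs_ge0 (tf i); have := hv i j; have := (htf i).1; nra.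
have [K hK] := hb_nat (hD x hx).
have [i [h1 h2]] := Une (Uand hK (hN1 K.+1)).
case: (htf i) => _ [h3|h3]; first by rewrite h3 in h2.
have : (N i)%:R <= K%:R :> RR.
  apply: ltW; apply: lt_le_trans h3 _; exact: h1.
rewrite ler_nat => h4; have := leq_trans h2 h4; by rewrite ltnn.
Qed.

Lemma cabsV (z : CC) : cabs z^-1 = (cabs z)^-1.
Proof. exact: Normc.normcV. Qed.

Lemma cabs_eq0 (z : CC) : cabs z = 0 -> z = 0.
Proof. exact: Normc.eq0_normc. Qed.

Lemma scont (D : ipoly I n) (x : 'I_n -> I -> CC) (c : 'I_n -> CC) :
  countably_incomplete U -> bCX U D -> (forall j, is_st U (x j) (c j)) ->
  is_st U (fun i => meval (fun j => x j i) (D i) - meval c (D i)) 0.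
Proof.
move=> ci hD hx.
pose rho i := \sum_(j < n) cabs (x j i - c j).
have rho0 : forall i, 0 <= rho i by move=> i; apply: sumr_ge0 => j _; exact: cabs_ge0.
have rhoj : forall i j, cabs (x j i - c j) <= rho i.
  move=> i j; rewrite /rho (bigD1 j) //= lerDl; apply: sumr_ge0 => k _; exact: cabs_ge0.
pose v i j := (x j i - c j) * ((rho i)%:C)^-1.
have hv : forall i j, cabs (v i j) <= 1.
  move=> i j; rewrite /v cabsM cabsV cabsR ger0_norm //.
  case: (eqVneq (rho i) 0) => [->|nz]; first by rewrite invr0 mulr0 ler01.
  have rp : 0 < rho i by rewrite lt_def nz rho0.
  by rewrite ler_pdivrMr // mul1r.
have hxv : forall i j, x j i = c j + v i j * (rho i)%:C.
  move=> i j; case: (eqVneq (rho i) 0) => [r0|nz].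
    rewrite r0 mulr0 addr0; apply/eqP; rewrite -subr_eq0; apply/eqP; apply: cabs_eq0.
    by apply/eqP; rewrite eq_le cabs_ge0 -r0 rhoj.
  have nzC : (rho i)%:C != 0.
    by apply/eqP => h; move/eqP: nz; apply; apply: complexI; exact: h.
  by rewrite /v divfK // addrC subrK.
have [M hM] := unif c ci hD hv.
move=> eps e0.
set M1 := `|M| + 1.
have M1p : 0 < M1 by rewrite /M1; have := normr_ge0 M; lra.
have rho_inf : forall d, 0 < d -> U (fun i => rho i < d).
  move=> d d0.
  have n0 : 0 < n%:R + 1 :> RR by have : 0 <= n%:R :> RR by []; lra.
  have dn : 0 < d / (n%:R + 1) by apply: divr_gt0.
  refine (uf_up (Ufin (fun j => hx j _ dn)) _) => i h.
  apply: (@le_lt_trans _ _ (\sum_(j < n) d / (n%:R + 1))).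
    by apply: ler_sum => j _; apply: ltW; exact: h j.
  rewrite sumr_const card_ord -(mulr_natr (d / (n%:R + 1)) n) mulrAC ltr_pdivrMr //.
  have : 0 <= n%:R :> RR by []. nra.
set dl := Num.min (1 / 2) (eps / (2 * M1)).
have dl0 : 0 < dl by rewrite /dl lt_min; apply/andP; split; [lra|apply: divr_gt0 => //; lra].
have dl1 : dl <= 1 / 2 by rewrite /dl ge_min lexx.
have dl2 : dl * (2 * M1) <= eps.
  have : dl <= eps / (2 * M1) by rewrite /dl ge_min lexx orbT.
  rewrite ler_pdivlMr //; lra.
refine (Uand2 (rho_inf dl dl0) hM _) => i hr hMi.
rewrite subr0.
have -> : meval (fun j => x j i) (D i) = (line_poly (D i) c (v i)).[(rho i)%:C].
  by rewrite line_polyE; apply: meval_eq => j; rewrite -hxv.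
have -> : meval c (D i) = (line_poly (D i) c (v i)).[0].
  by rewrite line_polyE; apply: meval_eq => j; rewrite mulr0 addr0.
have hr0 := rho0 i.
apply: le_lt_trans (poly_diff (M := M1) _ _) _.
- move=> z z1; rewrite line_polyE; apply: le_trans (hMi z z1) _.
  rewrite /M1; have := ler_norm M; lra.
- by rewrite cabsR ger0_norm //; lra.
- rewrite cabsR ger0_norm //; nra.
Qed.

Lemma key (D : ipoly I n) : countably_incomplete U -> bCX U D -> st_of U D (fun _ => 0) ->
  forall (k : nat) (eps : RR), 0 < eps -> U (fun i => forall z : 'I_n -> CC,
    (forall j, cabs (z j) <= k%:R) -> cabs (meval z (D i)) <= eps).
Proof.
move=> ci hD hst k eps e0.
set A := fun i => forall z : 'I_n -> CC,
    (forall j, cabs (z j) <= k%:R) -> cabs (meval z (D i)) <= eps.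
case: (uf_ultra U A) => // hnA; exfalso.
have ex : forall i, exists z : 'I_n -> CC, ~ A i ->
    (forall j, cabs (z j) <= k%:R) /\ eps < cabs (meval z (D i)).
  move=> i; case: (classic (A i)) => [a|na]; first by exists (fun _ => 0).
  have [z hz] := not_all_ex_not _ _ na.
  exists z => _; have [h1 h2] := imply_to_and _ _ hz; split => //.
  by rewrite ltNge; apply/negP.
have [zf hz] := cid_fun ex.
pose x j i := zf i j.
have hxb : forall j, hbounded U (x j).
  move=> j; exists k%:R; refine (uf_up hnA _) => i h; exact: ((hz i h).1 j).
have [cf hc] := cid_fun (fun j => st_exists (hxb j)).
have h3 := is_st_add (scont ci hD hc) (hst cf).
have [i [hi1 hi2]] := Une (Uand (h3 eps e0) hnA).
have [_ h4] := hz i hi2.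
rewrite subrK addr0 subr0 in hi1.
have : cabs (meval (zf i) (D i)) < eps by exact: hi1.
lra.
Qed.

End MAIN.

Section THM.
Variables (I : Type) (U : ultrafilter I) (n : nat) (a : ipoly I n -> Prop).

Lemma hb_const (z : CC) : hbounded U (fun _ => z).
Proof. by exists (cabs z); apply: Uall. Qed.

Lemma bCX_sub (P Q : ipoly I n) : bCX U P -> bCX U Q -> bCX U (isub P Q).
Proof.
move=> hP hQ x hx; have [r1 h1] := hP x hx; have [r2 h2] := hQ x hx.
exists (r1 + r2); refine (Uand2 h1 h2 _) => i g1 g2.
rewrite /ieval /isub mevalB; apply: le_trans (cabsD _ _) _; rewrite cabsN; lra.
Qed.

Lemma st_of_sub (P Q : ipoly I n) f g : st_of U P f -> st_of U Q g ->
  st_of U (isub P Q) (fun z => f z - g z).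
Proof.
move=> hP hQ z; apply: (is_st_ext (x := fun i => meval z (P i) - meval z (Q i))).
  by apply: Uall => i; rewrite /isub mevalB.
exact: is_st_sub.
Qed.

Lemma isum_in (Hi : is_ideal U a) m (F : 'I_m -> ipoly I n) :
  (forall k, a (F k)) -> a (isum F).
Proof.
case: Hi => _ _ a0 aD _.
elim: m F => [|m IH] F hF.
  have -> : isum F = @izero I n by apply: functional_extensionality => i; rewrite /isum big_ord0.
  exact: a0.
have -> : isum F = iadd (isum (fun k => F (widen_ord (leqnSn m) k))) (F ord_max).
  by apply: functional_extensionality => i; rewrite /isum /iadd big_ord_recr.
by apply: aD; [apply: IH => k|]; apply: hF.
Qed.

Lemma st_set_cl (f : ('I_n -> CC) -> CC) : st_set U a f -> co_closure (st_set U a) f.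
Proof.
move=> h r eps e0; exists f; split => // z _; rewrite subrr cabs0; exact: ltW.
Qed.

Lemma zero_in (Hi : is_ideal U a) : co_closure (st_set U a) (fun _ => 0).
Proof.
case: Hi => _ _ a0 _ _; apply: st_set_cl; exists (@izero I n); split => // z.
apply: (is_st_ext (x := fun _ => 0)); last exact: is_st_const.
by apply: Uall => i; rewrite /izero meval0.
Qed.

End THM.

Section HARD.
Variables (I : Type) (U : ultrafilter I) (n : nat) (a : ipoly I n -> Prop).

Lemma inf_to_inf2 : countably_incomplete U -> is_ideal U a -> saturated U a ->
  forall P, Inf U a P -> Inf2 U a P.
Proof.
move=> ci Hi sat P [hP [f [hf hcl]]].
have [B [aB stB]] := sat f hcl.
have hB : bCX U B by case: Hi => h _ _ _ _; apply: h.
pose D := isub P B.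
have hD : bCX U D := bCX_sub hP hB.
have stD : st_of U D (fun _ => 0).
  by move=> z; have := st_of_sub hf stB z; rewrite subrr.
have hK : forall k : nat, U (fun i => forall z : 'I_n -> CC,
    (forall j, cabs (z j) <= k%:R) -> cabs (meval z (D i)) <= (k.+1%:R ^+ 2)^-1).
  by move=> k; apply: key => //; rewrite invr_gt0 exprn_gt0 // ltr0n.
have [N [hN1 hN2]] := overspill ci hK.
pose s i : CC := ((N i).+1%:R)^-1.
have cs : forall i, cabs (s i) = ((N i).+1%:R)^-1 by move=> i; rewrite cabsV cabs_nat.
have small : forall eps : RR, 0 < eps -> U (fun i => ((N i).+1%:R : RR)^-1 < eps).
  move=> eps e0; set K := Num.Def.archi_bound (eps^-1).
  have hK' : eps^-1 < K%:R by apply: archi_boundP; rewrite invr_ge0 ltW.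
  refine (uf_up (hN1 K) _) => i hi.
  have hlt : eps^-1 < (N i).+1%:R.
    by apply: lt_le_trans hK' _; rewrite ler_nat; apply: leq_trans hi _.
  rewrite -[_^-1]mul1r ltr_pdivrMr ?ltr0n //.
  by move: hlt; rewrite -(ltr_pM2l e0) mulfV ?gt_eqF.
pose Q : ipoly I n := fun i => (s i)%:MP.
pose R : ipoly I n := fun i => (N i).+1%:R *: D i.
have Rsmall : forall K : nat, U (fun i => forall z : 'I_n -> CC,
    (forall j, cabs (z j) <= K%:R) -> cabs (meval z (R i)) <= ((N i).+1%:R)^-1).
  move=> K; refine (uf_up (hN1 K.+1) _) => i hi z hz.
  case: (hN2 i) => [h0|hb]; first by rewrite h0 in hi.
  rewrite /R mevalZ cabsM cabs_nat.
  have hx : cabs (meval z (D i)) <= ((N i).+1%:R ^+ 2)^-1.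
    apply: hb => j; apply: le_trans (hz j) _; rewrite ler_nat; exact: ltnW.
  have t0 : 0 < (N i).+1%:R :> RR by rewrite ltr0n.
  apply: le_trans (ler_wpM2l (ltW t0) hx) _.
  by rewrite expr2 invfM mulrA mulfV ?gt_eqF // mul1r.
have le1 : forall i, ((N i).+1%:R : RR)^-1 <= 1.
  by move=> i; rewrite invf_le1 ?ltr0n // ler1n.
have InfQ : Inf U a Q.
  split.
    move=> x hx; exists 1; apply: Uall => i; rewrite /ieval /Q mevalC cs; exact: le1.
  exists (fun _ => 0); split; last exact: zero_in.
  move=> z eps e0; refine (uf_up (small eps e0) _) => i h.
  by rewrite /Q mevalC subr0 cs.
have InfR : Inf U a R.
  split.
    move=> x hx; have [K hK2] := hb_pts hx; exists 1.
    refine (Uand2 hK2 (Rsmall K) _) => i h1 h2; apply: le_trans (h2 _ h1) _; exact: le1.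
  exists (fun _ => 0); split; last exact: zero_in.
  move=> z eps e0.
  have [K hK2] := hb_pts (x := fun j (_ : I) => z j) (fun j => hb_const U (z j)).
  refine (Uand2 (Uand hK2 (Rsmall K)) (small eps e0) _) => i [h1 h2] h3.
  by rewrite subr0; apply: le_lt_trans (h2 z h1) h3.
split => //; exists 1%N, (fun _ => Q), (fun _ => R); split; first by move=> k; split.
have -> : isub P (isum (fun _ : 'I_1 => imul Q R)) = B; last exact: aB.
apply: functional_extensionality => i.
rewrite /isub /isum /imul big_ord1 /Q /R /D /isub mul_mpolyC scalerA mulVf ?scale1r.
  by rewrite opprB addrC subrK.
by rewrite pnatr_eq0.
Qed.

End HARD.

Section EASY.
Variables (I : Type) (U : ultrafilter I) (n : nat) (a : ipoly I n -> Prop).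

Lemma inf2_to_inf : is_ideal U a -> saturated U a -> forall P, Inf2 U a P -> Inf U a P.
Proof.
move=> Hi sat P [hP [m [Qs [Rs [hQR hA]]]]].
have Hi' := Hi; case: Hi' => abCX aeq a0 aD aM.
have exQ : forall k, exists e, st_of U (Qs k) e.
  by move=> k; case: (hQR k) => [[_ [e [he _]]] _]; exists e.
have [ef hef] := cid_fun exQ.
have exR : forall k, exists fB : (('I_n -> CC) -> CC) * ipoly I n,
    st_of U (Rs k) fB.1 /\ a fB.2 /\ st_of U fB.2 fB.1.
  move=> k; case: (hQR k) => _ [_ [f [hf hcl]]]; have [B [aB stB]] := sat f hcl.
  by exists (f, B).
have [fb hfb] := cid_fun exR.
pose A := isub P (isum (fun k => imul (Qs k) (Rs k))).
have hAb : bCX U A := abCX _ hA.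
have exA : forall z : 'I_n -> CC, exists c, is_st U (fun i => meval z (A i)) c.
  move=> z; apply: st_exists; exact: (hAb (fun j _ => z j) (fun j => hb_const U (z j))).
have [fA hfA] := cid_fun exA.
pose g z := fA z + \sum_(k < m) ef k z * (fb k).1 z.
have stg : forall (Rk : 'I_m -> ipoly I n), (forall k, st_of U (Rk k) (fb k).1) ->
    st_of U (iadd A (isum (fun k => imul (Qs k) (Rk k)))) g.
  move=> Rk hR z.
  apply: (is_st_ext (x := fun i => meval z (A i) +
                        \sum_(k < m) meval z (Qs k i) * meval z (Rk k i))).
    apply: Uall => i; rewrite /iadd /isum [in RHS]mevalD [in RHS]raddf_sum; congr (_ + _).
    by apply: eq_bigr => k _; rewrite /= /imul mevalM.
  apply: is_st_add; first exact: hfA.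
  apply: (is_st_sum (x := fun k i => meval z (Qs k i) * meval z (Rk k i))) => k.
  by apply: is_st_mul; [exact: hef | exact: hR].
split => //; exists g; split.
  have e : iadd A (isum (fun k => imul (Qs k) (Rs k))) = P.
    by apply: functional_extensionality => i; rewrite /iadd /A /isub subrK.
  rewrite -e; apply: stg => k; exact: (hfb k).1.
apply: st_set_cl; exists (iadd A (isum (fun k => imul (Qs k) ((fb k).2)))); split.
  apply: aD => //; apply: (isum_in Hi) => k; apply: aM.
    by case: (hQR k) => [[]].
  exact: (hfb k).2.1.
apply: stg => k; exact: (hfb k).2.2.
Qed.

End EASY.

Theorem lemma6p4 (I : Type) (U : ultrafilter I) (n : nat)
  (a : ipoly I n -> Prop) :
  countably_incomplete U ->
  is_ideal U a ->
  saturated U a ->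
  forall P : ipoly I n, Inf U a P <-> Inf2 U a P.
Proof.
move=> ci Hi sat P; split; [exact: inf_to_inf2 | exact: inf2_to_inf].
Qed.
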